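(* Let $x:[0,1]\to\mathbb{R}$ be càdlàg and $0\le s<t\le1$. Define $\beta=\sup_{s\le u<v<w\le t}H(x(u),x(v),x(w))$. If $\eta>2\beta$, then \[N_\eta(x;[s,t])\le\frac{|x(t)-x(s)|+\beta}{\eta-\beta}.\]
   Context: $H(a,b,c)=(a\wedge c-a\wedge c\wedge b)\vee(a\vee c\vee b-a\vee c)$ is the distance from $b$ to the interval with endpoints $a$ and $c$. For $\eta>0$, $N_\eta(x;[s,t])$ (the number of $\eta$-oscillations of $x$ in $[s,t]$) is the largest integer $N$ for which there exist points $s\le t_1<t_2\le t_3<t_4\le\dots\le t_{2N-1}<t_{2N}\le t$ with $|x(t_{2k})-x(t_{2k-1})|>\eta$ for all $k=1,\dots,N$ (and $0$ if there are no such points). *)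

(* Defs.v *)
From Stdlib Require Import Reals.
From Coquelicot Require Import Coquelicot.
Open Scope R_scope.

(* x : [0,1] -> R is modelled as x : R -> R; only its values on [0,1] matter. *)
Definition cadlag (x : R -> R) : Prop :=
  (forall u, 0 <= u < 1 -> filterlim x (at_right u) (locally (x u))) /\
  (forall u, 0 < u <= 1 -> exists l : R, filterlim x (at_left u) (locally l)).

(* H(a,b,c) = (a∧c - a∧c∧b) ∨ (a∨c∨b - a∨c): distance from b to the interval
   with endpoints a and c. *)
Definition H (a b c : R) : R :=
  Rmax (Rmin a c - Rmin (Rmin a c) b) (Rmax (Rmax a c) b - Rmax a c).

(* There exist points s <= t_1 < t_2 <= t_3 < t_4 <= ... <= t_{2N-1} < t_{2N} <= t
   with |x(t_{2k}) - x(t_{2k-1})| > eta for k = 1..N.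
   Here a k = t_{2k+1}, b k = t_{2k+2} (0-indexed k < N). *)
Definition osc_admissible (x : R -> R) (eta s t : R) (N : nat) : Prop :=
  exists a b : nat -> R,
    (forall k, (k < N)%nat ->
       s <= a k /\ a k < b k /\ b k <= t /\ Rabs (x (b k) - x (a k)) > eta) /\
    (forall k, (S k < N)%nat -> b k <= a (S k)).

(* N_eta(x;[s,t]) is the largest N with osc_admissible x eta s t N
   (0 is always admissible). *)

(* Main.v *)
Require Import Defs.
From Stdlib Require Import Reals Lra Lia.
From Coquelicot Require Import Coquelicot.
Open Scope R_scope.

Definition Pr (y : R -> R) (s t beta : R) := forall u v w, s <= u -> u < v -> v < w -> w <= t ->
  y v <= Rmax (y u) (y w) + beta /\ Rmin (y u) (y w) - beta <= y v.

Lemma Pr_opp y s t beta : Pr y s t beta -> Pr (fun z => - y z) s t beta.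
Proof.
  intros P u v w h1 h2 h3 h4. destruct (P u v w h1 h2 h3 h4) as [A B].
  unfold Rmax, Rmin in *; repeat destruct Rle_dec; lra.
Qed.

Lemma L3 y s t beta a b c : Pr y s t beta -> 0 <= beta -> s <= a -> a < b -> b <= c -> c <= t ->
  y b - y a > beta -> y c >= y b - beta.
Proof.
  intros P hb h1 h2 h3 h4 h5. destruct (Req_dec b c) as [->|hne]; [lra|].
  destruct (P a b c) as [A _]; try lra.
  unfold Rmax in *; destruct Rle_dec; lra.
Qed.

Lemma L1 y s t beta a b c : Pr y s t beta -> 0 <= beta -> s <= c -> c <= a -> a < b -> b <= t ->
  y b - y a > beta -> y a >= y c - beta.
Proof.
  intros P hb h1 h2 h3 h4 h5. destruct (Req_dec c a) as [->|hne]; [lra|].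
  destruct (P c a b) as [_ A]; try lra.
  unfold Rmin in *; destruct Rle_dec; lra.
Qed.

Lemma nodir y s t beta eta a1 b1 a2 b2 : Pr y s t beta -> 0 <= beta -> eta > 2 * beta ->
  s <= a1 -> a1 < b1 -> b1 <= a2 -> a2 < b2 -> b2 <= t ->
  y b1 - y a1 > eta -> y a2 - y b2 > eta -> False.
Proof.
  intros P hb he h1 h2 h3 h4 h5 u d.
  assert (H1 := L3 y s t beta a1 b1 a2 P hb h1 h2 h3 ltac:(lra) ltac:(lra)).
  assert (H2 := L1 (fun z => - y z) s t beta a2 b2 b1 (Pr_opp _ _ _ _ P) hb ltac:(lra) h3 h4 h5 ltac:(lra)).
  destruct (P a1 b1 b2) as [A _]; try lra.
  unfold Rmax in *; destruct Rle_dec; lra.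
Qed.

Lemma chain y s t beta eta (a b : nat -> R) M : Pr y s t beta -> 0 <= beta -> eta > 2 * beta ->
  (forall k, (k < S M)%nat -> s <= a k /\ a k < b k /\ b k <= t /\ y (b k) - y (a k) > eta) ->
  (forall k, (S k < S M)%nat -> b k <= a (S k)) ->
  y t - y s > INR (S M) * (eta - beta) - beta.
Proof.
  intros P hb he HA HB.
  assert (C : forall k, (k < S M)%nat -> y (b k) > y s - beta + INR (S k) * eta - INR k * beta).
  { induction k; intros hk.
    - destruct (HA 0%nat hk) as (h1 & h2 & h3 & h4).
      assert (L := L1 y s t beta (a 0%nat) (b 0%nat) s P hb ltac:(lra) h1 h2 h3 ltac:(lra)).
      simpl. lra.
    - assert (IH := IHk ltac:(lia)).
      destruct (HA k ltac:(lia)) as (h1 & h2 & h3 & h4).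
      destruct (HA (S k) hk) as (g1 & g2 & g3 & g4).
      assert (hbk := HB k hk).
      assert (L := L3 y s t beta (a k) (b k) (a (S k)) P hb h1 h2 hbk ltac:(lra) ltac:(lra)).
      rewrite !S_INR in *. try rewrite S_INR. lra. }
  assert (CM := C M ltac:(lia)).
  destruct (HA M ltac:(lia)) as (h1 & h2 & h3 & h4).
  assert (L := L3 y s t beta (a M) (b M) t P hb h1 h2 h3 ltac:(lra) ltac:(lra)).
  rewrite S_INR in *. lra.
Qed.

Lemma allsame y s t beta eta (a b : nat -> R) N : Pr y s t beta -> 0 <= beta -> eta > 2 * beta ->
  (forall k, (k < N)%nat -> s <= a k /\ a k < b k /\ b k <= t /\ Rabs (y (b k) - y (a k)) > eta) ->
  (forall k, (S k < N)%nat -> b k <= a (S k)) ->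
  (0 < N)%nat -> y (b 0%nat) - y (a 0%nat) > eta ->
  forall k, (k < N)%nat -> y (b k) - y (a k) > eta.
Proof.
  intros P hb he HA HB hN h0. induction k; intros hk; [exact h0|].
  assert (IH := IHk ltac:(lia)).
  destruct (HA k ltac:(lia)) as (h1 & h2 & h3 & h4).
  destruct (HA (S k) hk) as (g1 & g2 & g3 & g4).
  assert (hbk := HB k hk).
  revert g4; unfold Rabs; destruct Rcase_abs; intro g4; [|lra].
  exfalso. apply (nodir y s t beta eta (a k) (b k) (a (S k)) (b (S k))); auto; lra.
Qed.

Theorem lemma5 (x : R -> R) (s t eta beta : R) :
  cadlag x ->
  0 <= s -> s < t -> t <= 1 ->
  is_lub (fun r => exists u v w, s <= u /\ u < v /\ v < w /\ w <= t /\
                                 r = H (x u) (x v) (x w)) beta ->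
  eta > 2 * beta ->
  forall N : nat, osc_admissible x eta s t N ->
    INR N <= (Rabs (x t - x s) + beta) / (eta - beta).
Proof.
  intros _ hs hst ht [ub _] he N [a [b [HA HB]]].
  assert (P : Pr x s t beta).
  { intros u v w h1 h2 h3 h4.
    assert (Hl : H (x u) (x v) (x w) <= beta) by (apply ub; exists u, v, w; repeat split; auto).
    unfold H, Rmax, Rmin in *; repeat destruct Rle_dec; lra. }
  assert (hb : 0 <= beta).
  { assert (Hl : H (x s) (x ((s+t)/2)) (x t) <= beta)
      by (apply ub; exists s, ((s+t)/2), t; repeat split; lra).
    unfold H, Rmax, Rmin in *; repeat destruct Rle_dec; lra. }
  assert (hpos : 0 < eta - beta) by lra.
  assert (KEY : Rabs (x t - x s) >= INR N * (eta - beta) - beta).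
  { destruct N as [|M].
    - change (INR 0) with 0. assert (0 <= Rabs (x t - x s)) by apply Rabs_pos. lra.
    - destruct (HA 0%nat ltac:(lia)) as (h1 & h2 & h3 & h4).
      revert h4; unfold Rabs at 1; destruct Rcase_abs; intro h4.
      + set (y := fun z => - x z).
        assert (Py := Pr_opp _ _ _ _ P).
        assert (HA' : forall k, (k < S M)%nat -> s <= a k /\ a k < b k /\ b k <= t /\ Rabs (y (b k) - y (a k)) > eta).
        { intros k hk; destruct (HA k hk) as (g1 & g2 & g3 & g4); repeat split; auto.
          unfold y; replace (- x (b k) - - x (a k)) with (- (x (b k) - x (a k))) by ring.
          rewrite Rabs_Ropp; auto. }
        assert (S0 := allsame y s t beta eta a b (S M) Py hb he HA' HB ltac:(lia) ltac:(unfold y; lra)).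
        assert (Cy := chain y s t beta eta a b M Py hb he
                  (fun k hk => let '(conj g1 (conj g2 (conj g3 _))) := HA' k hk in conj g1 (conj g2 (conj g3 (S0 k hk)))) HB).
        unfold y in Cy. unfold Rabs; destruct Rcase_abs; lra.
      + assert (S0 := allsame x s t beta eta a b (S M) P hb he HA HB ltac:(lia) ltac:(lra)).
        assert (Cy := chain x s t beta eta a b M P hb he
                  (fun k hk => let '(conj g1 (conj g2 (conj g3 _))) := HA k hk in conj g1 (conj g2 (conj g3 (S0 k hk)))) HB).
        unfold Rabs; destruct Rcase_abs; lra. }
  replace (INR N) with ((INR N * (eta - beta)) / (eta - beta)) by (field; lra).
  unfold Rdiv. apply Rmult_le_compat_r.
  - left; apply Rinv_0_lt_compat; lra.
  - lra.
Qed.
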